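(* For any cubic graphs $G$ and $A$, a graph $G\circ A^-$ is Class $1$ if and only if $G$ and $A$ are Class $1$.
   Context: A cubic graph is Class $1$ if its chromatic index is $3$ and Class $2$ if its chromatic index is $4$. Let $G$ and $A$ be $3$-regular graphs, let $a$ be a vertex of $A$ and $A^-=A-a$. A graph $G\circ A^-$ is any graph obtained by replacing each vertex $v$ of $G$ by a copy $A^-_v$ of $A^-$ and, for each edge $uv$ of $G$, adding an edge joining a vertex of degree $2$ of $A^-_u$ to a vertex of degree $2$ of $A^-_v$, so that each degree-$2$ vertex of each copy is incident with exactly one added edge (the choices of $a$ and of these edges are arbitrary). *)

(* Defs.v *)
From mathcomp Require Import all_boot.
Set Implicit Arguments. Unset Strict Implicit. Unset Printing Implicit Defensive.

Definition simple_graph (T : finType) (e : rel T) : Prop :=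
  symmetric e /\ irreflexive e.

Definition cubic (T : finType) (e : rel T) : Prop :=
  simple_graph e /\ forall x : T, #|[set y | e x y]| = 3.

Definition proper_edge_coloring (T : finType) (e : rel T) (k : nat)
    (c : T -> T -> 'I_k) : Prop :=
  (forall x y, e x y -> c x y = c y x) /\
  (forall x y z, e x y -> e x z -> y != z -> c x y != c x z).

Definition edge_colorable (T : finType) (e : rel T) (k : nat) : Prop :=
  exists c : T -> T -> 'I_k, proper_edge_coloring e c.

Definition chromatic_index (T : finType) (e : rel T) (k : nat) : Prop :=
  edge_colorable e k /\ forall j, j < k -> ~ edge_colorable e j.

Definition class1 (T : finType) (e : rel T) : Prop := chromatic_index e 3.
Definition class2 (T : finType) (e : rel T) : Prop := chromatic_index e 4.

Definition minus_vert (W : finType) (a : W) := {w : W | w != a}.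

(* H is a graph G o A^- : vertex set V x (W \ {a});
   - inside each copy A^-_v the edges are those of A;
   - edges between different copies u, v join degree-2 vertices of A^-
     (i.e. neighbours of a in A) and only occur when uv is an edge of G;
   - for each edge uv of G exactly one edge joins A^-_u and A^-_v;
   - each degree-2 vertex of each copy is incident with exactly one added edge. *)
Definition is_comp (V W : finType) (G : rel V) (A : rel W) (a : W)
    (H : rel (V * minus_vert a)) : Prop :=
  symmetric H /\
  (forall v (x y : minus_vert a), H (v, x) (v, y) = A (val x) (val y)) /\
  (forall u v (x y : minus_vert a), u != v -> H (u, x) (v, y) ->
      [/\ G u v, A (val x) a & A (val y) a]) /\
  (forall u v, u != v -> G u v ->
      #|[set p : minus_vert a * minus_vert a | H (u, p.1) (v, p.2)]| = 1) /\
  (forall v (x : minus_vert a), A (val x) a ->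
      #|[set q : V * minus_vert a | (q.1 != v) && H (v, x) q]| = 1).
Arguments is_comp {V W} G A a H.

(* Main.v *)
Require Import Defs.
From mathcomp Require Import all_boot.
From mathcomp Require Import zify.
Set Implicit Arguments. Unset Strict Implicit. Unset Printing Implicit Defensive.
Section Inv.
Variables (T : finType) (f : T -> T).
Hypothesis fK : forall x, f (f x) = x.
Hypothesis fN : forall x, f x != x.

Lemma inv_even (S : {set T}) : (forall x, x \in S -> f x \in S) -> ~~ odd #|S|.
Proof.
have [n] := ubnP #|S|; elim: n S => [|m IH] S Hn Hcl; first by [].
case: (set_0Vmem S) => [->|[x xS]]; first by rewrite cards0.
have fxS := Hcl x xS.
have fxx : f x != x := fN x.
set S' := S :\ x :\ f x.
have HS' : #|S| = #|S'|.+2.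
  by rewrite (cardsD1 x S) xS (cardsD1 (f x) (S :\ x)) !inE fxx fxS.
rewrite HS' /= negbK; apply: IH => [|y]; first lia.
rewrite !inE => /and3P [yfx yx yS].
rewrite Hcl // andbT; apply/andP; split.
  by apply: contra yx => /eqP e; rewrite -[y]fK e fK.
by apply: contra yfx => /eqP e; rewrite -e fK.
Qed.

Lemma inv_parity (S : {set T}) :
  odd #|S| = odd #|[set x in S | f x \notin S]|.
Proof.
rewrite -(cardsID (f @^-1: S) S).
have -> : S :\: f @^-1: S = [set x in S | f x \notin S].
  by apply/setP => y; rewrite !inE andbC.
rewrite oddD (negPf (inv_even _)) //.
by move=> y; rewrite !inE fK => /andP [a b]; rewrite a b.
Qed.
End Inv.
Section Col.
Variables (T : finType) (e : rel T) (c : T -> T -> 'I_3).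
Hypothesis ec : cubic e.
Hypothesis pc : proper_edge_coloring e c.

Lemma col_uniq x y z : e x y -> e x z -> c x y = c x z -> y = z.
Proof.
move=> exy exz Hc; apply/eqP; apply: contraT => yz.
by have := pc.2 x y z exy exz yz; rewrite Hc eqxx.
Qed.

Lemma col_surj x k : exists y, e x y && (c x y == k).
Proof.
set N := [set y | e x y].
have inj : {in N &, injective (c x)}.
  by move=> y z; rewrite !inE => Hy Hz; apply: col_uniq.
have Hc : #|c x @: N| = 3 by rewrite card_in_imset // ec.2.
have : c x @: N = [set: 'I_3].
  by apply/eqP; rewrite eqEcard subsetT cardsT card_ord Hc.
move/setP/(_ k); rewrite inE => /imsetP [y]; rewrite inE => Hy ->.
by exists y; rewrite Hy eqxx.
Qed.

Definition mate k x := odflt x [pick y | e x y && (c x y == k)].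

Lemma mateP k x : e x (mate k x) /\ c x (mate k x) = k.
Proof.
rewrite /mate; case: pickP => [y /andP [H1 /eqP H2] | H] //=.
by have [y Hy] := col_surj x k; rewrite H in Hy.
Qed.

Lemma mate_uniq k x y : e x y -> c x y = k -> mate k x = y.
Proof. by move=> H1 H2; have [M1 M2] := mateP k x; apply: col_uniq M1 H1 _; rewrite M2. Qed.

Lemma mateK k x : mate k (mate k x) = x.
Proof.
have [M1 M2] := mateP k x; apply: mate_uniq; first by rewrite ec.1.1.
by rewrite -pc.1.
Qed.

Lemma mateN k x : mate k x != x.
Proof.
have [M1 _] := mateP k x; apply: contraTneq M1 => ->; by rewrite ec.1.2.
Qed.
End Col.

Lemma cubic_lb (T : finType) (e : rel T) (x : T) j :
  cubic e -> j < 3 -> ~ edge_colorable e j.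
Proof.
move=> ec lt [c [_ pc]].
set N := [set y | e x y].
have inj : {in N &, injective (c x)}.
  move=> y z; rewrite !inE => Hy Hz Hc; apply/eqP; apply: contraT => yz.
  by have := pc x y z Hy Hz yz; rewrite Hc eqxx.
have := max_card (c x @: N); rewrite card_in_imset // ec.2 card_ord; lia.
Qed.

Lemma nonempty_of (T : finType) (e : rel T) : ~ edge_colorable e 0 -> exists x : T, True.
Proof.
case: (pickP (@predT T)) => [x _ | none] H; first by exists x.
exfalso; apply: H.
have F : T -> False by move=> x; have := none x.
exists (fun x => False_rect _ (F x)); split => x; case: (F x).
Qed.

Section Main.
Variables (V W : finType) (G : rel V) (A : rel W) (a : W)
    (H : rel (V * minus_vert a)).
Hypotheses (cubG : cubic G) (cubA : cubic A) (comp : is_comp G A a H).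

Notation M := (minus_vert a).

Lemma Hsym : symmetric H. Proof. exact: comp.1. Qed.
Lemma Hin v (x y : M) : H (v, x) (v, y) = A (val x) (val y).
Proof. exact: comp.2.1. Qed.
Lemma Hout u v (x y : M) : u != v -> H (u, x) (v, y) ->
      [/\ G u v, A (val x) a & A (val y) a].
Proof. exact: comp.2.2.1. Qed.
Lemma Hedge u v : u != v -> G u v ->
      #|[set p : M * M | H (u, p.1) (v, p.2)]| = 1.
Proof. exact: comp.2.2.2.1. Qed.
Lemma Hbd v (x : M) : A (val x) a ->
      #|[set q : V * M | (q.1 != v) && H (v, x) q]| = 1.
Proof. exact: comp.2.2.2.2. Qed.

Lemma Asym : symmetric A. Proof. exact: cubA.1.1. Qed.
Lemma Airr x : A x x = false. Proof. exact: cubA.1.2. Qed.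
Lemma Gsym : symmetric G. Proof. exact: cubG.1.1. Qed.
Lemma Girr x : G x x = false. Proof. exact: cubG.1.2. Qed.

Definition out (q : V * M) : V * M := odflt q [pick q' | (q'.1 != q.1) && H q q'].

Lemma outP v (x : M) : A (val x) a -> (out (v, x)).1 != v /\ H (v, x) (out (v, x)).
Proof.
move=> Hx; have /eqP/cards1P [q Hq] := Hbd v Hx.
have : q \in [set q : V * M | (q.1 != v) && H (v, x) q] by rewrite Hq set11.
rewrite inE /out => Hq1; case: pickP => [q' /andP [] //| none].
by have := none q; rewrite Hq1.
Qed.

Lemma out_uniq v (x : M) q : q.1 != v -> H (v, x) q -> q = out (v, x).
Proof.
move=> q1 Hvq.
have Hx : A (val x) a.
  by case: q q1 Hvq => u y /= q1 Hvq; rewrite eq_sym in q1; case: (Hout q1 Hvq).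
have /eqP/cards1P [q0 Hq0] := Hbd v Hx.
have [o1 o2] := outP v Hx.
have : q \in [set q : V * M | (q.1 != v) && H (v, x) q] by rewrite inE q1 Hvq.
have : out (v, x) \in [set q : V * M | (q.1 != v) && H (v, x) q] by rewrite inE o1 o2.
by rewrite Hq0 !inE => /eqP -> /eqP ->.
Qed.

Lemma Hcubic : cubic H.
Proof.
split; first split; first exact: Hsym.
  by case=> v x; rewrite Hin Airr.
case=> v x.
pose phi := fun y : W => if y == a then out (v, x) else (v, insubd x y).
have Hphi : {in [set y | A (val x) y] &, injective phi}.
  move=> y1 y2; rewrite !inE /phi.
  case: (eqVneq y1 a) => [->|n1]; case: (eqVneq y2 a) => [->|n2] //.
  - move=> Ha _ E; have [o1 _] := outP v Ha.
    by rewrite E /= eqxx in o1.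
  - move=> _ Ha E; have [o1 _] := outP v Ha.
    by rewrite -E /= eqxx in o1.
  - move=> _ _ [] /(congr1 val); rewrite !val_insubd n1 n2 //.
have -> : [set q | H (v, x) q] = phi @: [set y | A (val x) y].
  apply/setP => q; rewrite inE; apply/idP/imsetP.
    case: q => u y Hq.
    case: (eqVneq u v) => [E|uv].
      subst u; exists (val y); first by rewrite inE -(Hin v).
      rewrite /phi (negPf (valP y)); congr (_,_); apply: val_inj.
      by rewrite val_insubd (valP y).
    have uv' := uv; rewrite eq_sym in uv'; have [_ Ha _] := Hout uv' Hq.
    exists a; first by rewrite inE.
    rewrite /phi eqxx; apply: out_uniq => //.
  case=> y; rewrite inE /phi; case: (eqVneq y a) => [->|ny].
    by move=> Ha ->; have [] := outP v Ha.
  move=> Hy ->; rewrite Hin val_insubd ny //.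
by rewrite card_in_imset // cubA.2.
Qed.

Lemma card_nbA (x0 : M) : #|[set y : M | A (val y) a]| = 3.
Proof.
rewrite -(card_imset _ val_inj) -(cubA.2 a).
have -> // : val @: [set y : M | A (val y) a] = [set y | A a y].
apply/setP => y; rewrite inE; apply/imsetP/idP.
  by case=> y'; rewrite inE Asym => ? ->.
move=> Hy; have ny : y != a by apply: contraTneq Hy => ->; rewrite Airr.
exists (insubd x0 y); last by rewrite val_insubd ny.
by rewrite inE val_insubd ny Asym.
Qed.

Lemma sum_ord3 (k : 'I_3) : \sum_(j < 3) (k == j) = 1.
Proof. by rewrite (bigD1 k) //= eqxx big1 // => j /negPf; rewrite eq_sym => ->. Qed.

Section Fwd.
Variable cH : V * M -> V * M -> 'I_3.
Hypothesis pH : proper_edge_coloring H cH.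

Lemma bd_distinct v (x x' : M) : A (val x) a -> A (val x') a -> x != x' ->
  cH (v, x) (out (v, x)) != cH (v, x') (out (v, x')).
Proof.
move=> Hx Hx' xx'.
pose S := [set q : V * M | q.1 == v].
pose mt := mate H cH.
pose P k := [set q in S | mt k q \notin S].
have par k : odd #|P k| = odd #|S|.
  by rewrite (@inv_parity _ (mt k) (mateK Hcubic pH k) (mateN Hcubic pH k) S).
have memP k q : (q \in P k) = [&& q.1 == v, A (val q.2) a & cH q (out q) == k].
  case: q => u y; rewrite !inE /=; case: (eqVneq u v) => [->|_] //=.
  have [M1 M2] := mateP Hcubic pH k (v, y).
  apply/idP/idP.
    case E: (mt k (v, y)) => [w z] /= wv.
    rewrite /mt in E; rewrite E in M1 M2.
    have wv' := wv; rewrite eq_sym in wv'; have [_ Ha _] := Hout wv' M1.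
    by rewrite -(@out_uniq v y (w, z) wv M1) M2 eqxx andbT.
  case/andP => Ha /eqP Hk; have [o1 o2] := outP v Ha.
  by rewrite /mt (mate_uniq Hcubic pH o2 Hk).
pose B := [set q : V * M | (q.1 == v) && A (val q.2) a].
have cardB : #|B| = 3.
  have -> : B = (fun y => (v, y)) @: [set y : M | A (val y) a].
    apply/setP => [[u y]]; rewrite !inE /=; apply/idP/imsetP.
      by case/andP => /eqP -> Hy; exists y; rewrite ?inE.
    by case=> y'; rewrite inE => Hy [-> ->]; rewrite eqxx.
  by rewrite card_imset ?(card_nbA x) // => y1 y2 [].
have cardP k : #|P k| = \sum_(q in B) (cH q (out q) == k).
  rewrite -sum1_card (eq_bigl (fun q => (q \in B) && (cH q (out q) == k))).
    by rewrite big_mkcondr /=; apply: eq_bigr => q _; case: (_ == k).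
  by move=> q; rewrite memP !inE andbA.
have ord3 (j : 'I_3) : [\/ j = inord 0, j = inord 1 | j = inord 2].
  by case: j => [[|[|[|]]]] // i; [constructor 1|constructor 2|constructor 3];
    apply: val_inj; rewrite /= inordK.
have sum3 : #|P (inord 0)| + #|P (inord 1)| + #|P (inord 2)| = 3.
  have : \sum_(k < 3) #|P k| = 3.
    rewrite (eq_bigr _ (fun k _ => cardP k)) exchange_big /=.
    rewrite -[RHS]cardB -sum1_card.
    by apply: eq_bigr => q _; rewrite sum_ord3.
  rewrite !big_ord_recl big_ord0.
  have -> : (lift ord0 (lift ord0 ord0) : 'I_3) = inord 2 by apply: val_inj; rewrite /= inordK.
  have -> : (lift ord0 ord0 : 'I_3) = inord 1 by apply: val_inj; rewrite /= inordK.
  have -> : (ord0 : 'I_3) = inord 0 by apply: val_inj; rewrite /= inordK.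
  lia.
apply/negP => /eqP Ec.
set k := cH (v, x) (out (v, x)) in Ec.
have two : 2 <= #|P k|.
  have <- : #|[set (v, x); (v, x')]| = 2.
    rewrite cards2; suff -> : (v, x) != (v, x') by [].
    by apply: contra xx' => /eqP [E]; rewrite E.
  apply: subset_leq_card; apply/subsetP => q /set2P [] ->;
    by rewrite memP /= eqxx ?Hx ?Hx' /= -?Ec eqxx.
have p0 := congr1 nat_of_bool (par (inord 0)); have p1 := congr1 nat_of_bool (par (inord 1)).
have p2 := congr1 nat_of_bool (par (inord 2)); rewrite -!modn2 in p0 p1 p2.
by case: (ord3 k) => E; rewrite E in two; lia.
Qed.
End Fwd.

Definition io (x0 : M) (y : W) : M := insubd x0 y.
Lemma val_io x0 y : y != a -> val (io x0 y) = y.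
Proof. by move=> ny; rewrite val_insubd ny. Qed.

Lemma A_neq x y : A x y -> x != y.
Proof. by apply: contraTneq => ->; rewrite Airr. Qed.

Lemma fwdA : class1 H -> class1 A.
Proof.
case=> [[cH pH] nH].
have [[v0 x0] _] := nonempty_of (nH 0 isT).
pose cA x y := if x == a then (if y == a then ord0 else cH (v0, io x0 y) (out (v0, io x0 y)))
  else if y == a then cH (v0, io x0 x) (out (v0, io x0 x))
  else cH (v0, io x0 x) (v0, io x0 y).
split; last by move=> j lt; apply: (cubic_lb a cubA lt).
exists cA; split.
- move=> x y Axy; rewrite /cA; case: (eqVneq x a) => [Ex|nx]; case: (eqVneq y a) => [Ey|ny] //.
  by apply: pH.1; rewrite Hin !val_io.
- move=> x y z Axy Axz yz; rewrite /cA.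
  case: (eqVneq x a) => [Ex|nx].
    subst x; have ny := A_neq Axy; have nz := A_neq Axz; rewrite eq_sym in ny; rewrite eq_sym in nz.
    rewrite (negPf ny) (negPf nz).
    apply: (bd_distinct pH); first (by rewrite val_io // Asym); first (by rewrite val_io // Asym).

    by apply: contra yz => /eqP E; rewrite -(val_io x0 ny) -(val_io x0 nz) E.
  case: (eqVneq y a) => [Ey|ny]; case: (eqVneq z a) => [Ez|nz].
  + by subst; rewrite eqxx in yz.
  + subst y; have Ha : A (val (io x0 x)) a by rewrite val_io.
    have [o1 o2] := outP v0 Ha.
    apply: pH.2 => //; first by rewrite Hin !val_io.
    by apply: contra o1 => /eqP ->.
  + subst z; have Ha : A (val (io x0 x)) a by rewrite val_io.
    have [o1 o2] := outP v0 Ha.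
    apply: pH.2 => //; first by rewrite Hin !val_io.
    by apply: contra o1 => /eqP <-.
  + apply: pH.2; rewrite ?Hin ?val_io //.
    by apply: contra yz => /eqP [E]; rewrite -(val_io x0 ny) -(val_io x0 nz) E.
Qed.

Lemma G_neq u v : G u v -> u != v.
Proof. by apply: contraTneq => ->; rewrite Girr. Qed.

Lemma pair_uniq u v (x y x' y' : M) : u != v -> G u v -> H (u, x) (v, y) -> H (u, x') (v, y') ->
  x = x' /\ y = y'.
Proof.
move=> uv Guv H1 H2; have /eqP/cards1P [p0 Hp0] := Hedge uv Guv.
have : (x, y) \in [set p : M * M | H (u, p.1) (v, p.2)] by rewrite inE.
have : (x', y') \in [set p : M * M | H (u, p.1) (v, p.2)] by rewrite inE.
by rewrite Hp0 !inE => /eqP <- /eqP [-> ->].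
Qed.

Lemma pickS u v : u != v -> G u v -> exists p,
  [pick p : M * M | H (u, p.1) (v, p.2)] = Some p /\ H (u, p.1) (v, p.2).
Proof.
move=> uv Guv; case: pickP => [p Hp | none]; first by exists p.
have /eqP/cards1P [p0 Hp0] := Hedge uv Guv.
have : p0 \in [set p : M * M | H (u, p.1) (v, p.2)] by rewrite Hp0 set11.
by rewrite inE none.
Qed.

Lemma fwdG : class1 H -> class1 G.
Proof.
case=> [[cH pH] nH].
have [[v0 x0] _] := nonempty_of (nH 0 isT).
pose cG u v := if [pick p : M * M | H (u, p.1) (v, p.2)] is Some p then cH (u, p.1) (v, p.2) else ord0.
split; last by move=> j lt; apply: (cubic_lb v0 cubG lt).
exists cG; split.
- move=> u v Guv; have uv := G_neq Guv; have Gvu : G v u by rewrite Gsym.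
  have vu := G_neq Gvu.
  have [p [Ep Hp]] := pickS uv Guv; have [q [Eq Hq]] := pickS vu Gvu.
  rewrite /cG Ep Eq; rewrite Hsym in Hq.
  have [E1 E2] := pair_uniq uv Guv Hp Hq.
  by rewrite E1 E2; apply: (pH.1 _ _ Hq).
- move=> u v w Guv Guw vw; have uv := G_neq Guv; have uw := G_neq Guw.
  have [p [Ep Hp]] := pickS uv Guv; have [q [Eq Hq]] := pickS uw Guw.
  rewrite /cG Ep Eq.
  have [_ Ap _] := Hout uv Hp; have [_ Aq _] := Hout uw Hq.
  have vu : (v, p.2).1 != u by rewrite /= eq_sym.
  have wu : (w, q.2).1 != u by rewrite /= eq_sym.
  rewrite (out_uniq vu Hp) (out_uniq wu Hq).
  case: (eqVneq p.1 q.1) => [E|pq].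
    have := out_uniq vu Hp; have := out_uniq wu Hq; rewrite E => <- [] E'.
    by rewrite E' eqxx in vw.
  exact: (bd_distinct pH).
Qed.

Section Bwd.
Variables (cG : V -> V -> 'I_3) (cA : W -> W -> 'I_3).
Hypotheses (pG : proper_edge_coloring G cG) (pA : proper_edge_coloring A cA).
Variable x0 : M.

Definition sigma u k :=
  if [pick x : M | A (val x) a && (cA (val x) a == k)] is Some x
  then cG u (out (u, x)).1 else k.

Lemma sigmaP u (x : M) : A (val x) a -> sigma u (cA (val x) a) = cG u (out (u, x)).1.
Proof.
move=> Ax; rewrite /sigma; case: pickP => [x' /andP [Ax' /eqP Ec] | none].
  suff -> : x' = x by [].
  apply: val_inj; apply: (col_uniq pA (x := a)); first (by rewrite Asym); first (by rewrite Asym).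
  by rewrite -(pA.1 _ _ Ax') -(pA.1 _ _ Ax) Ec.
by have := none x; rewrite Ax eqxx.
Qed.

Lemma sigma_inj u k k' : k != k' -> sigma u k != sigma u k'.
Proof.
move=> kk.
have [M1 M2] := mateP cubA pA k a; have [M1' M2'] := mateP cubA pA k' a.
set y := mate A cA k a in M1 M2; set y' := mate A cA k' a in M1' M2'.
have ny : y != a by rewrite eq_sym; apply: A_neq.
have ny' : y' != a by rewrite eq_sym; apply: A_neq.
have Ay : A (val (io x0 y)) a by rewrite val_io // Asym.
have Ay' : A (val (io x0 y')) a by rewrite val_io // Asym.
have Ck : cA (val (io x0 y)) a = k by rewrite val_io // -(pA.1 _ _ M1).
have Ck' : cA (val (io x0 y')) a = k' by rewrite val_io // -(pA.1 _ _ M1').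
rewrite -{1}Ck -Ck' !sigmaP //.
have [o1 o2] := outP u Ay; have [o1' o2'] := outP u Ay'.
move: o1 o2 o1' o2'.
case: (out (u, io x0 y)) => [w z]; case: (out (u, io x0 y')) => [w' z'] /= o1 o2 o1' o2'.
rewrite eq_sym in o1; rewrite eq_sym in o1'.
have [Gw _ _] := Hout o1 o2; have [Gw' _ _] := Hout o1' o2'.
case: (eqVneq w w') => [E|ww]; last exact: pG.2.
subst w'; have [E _] := pair_uniq o1 Gw o2 o2'.
by move: kk; rewrite -Ck -Ck' E eqxx.
Qed.

Lemma bwdH : class1 G -> class1 A -> class1 H.
Proof.
case=> _ nG _.
have [v0 _] := nonempty_of (nG 0 isT).
pose cH (p q : V * M) := if p.1 == q.1 then sigma p.1 (cA (val p.2) (val q.2)) else cG p.1 q.1.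
split; last by move=> j lt; apply: (cubic_lb (v0, x0) Hcubic lt).
exists cH; split.
- case=> u x [w y] Hpq; rewrite /cH /=; case: (eqVneq u w) => [E|uw].
    by subst w; rewrite (pA.1 _ _ _) // -(Hin u).
  have [Guw _ _] := Hout uw Hpq; exact: pG.1.
- case=> u x [w y] [w' y'] Hq Hr qr; rewrite /cH /=.
  case: (eqVneq u w) => [E|uw]; case: (eqVneq u w') => [E'|uw'].
  + subst w w'; apply: sigma_inj; apply: pA.2; rewrite -?(Hin u) //.
    by apply: contra qr => /eqP E; apply/eqP; congr (_, _); apply: val_inj.
  + subst w; have [_ Ax _] := Hout uw' Hr.
    have wu : (w', y').1 != u by rewrite /= eq_sym.
    have -> : w' = (out (u, x)).1 by rewrite -(out_uniq wu Hr).
    rewrite -sigmaP //; apply: sigma_inj; apply: pA.2; rewrite -?(Hin u) //.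
    exact: (valP y).
  + subst w'; have [_ Ax _] := Hout uw Hq.
    have wu : (w, y).1 != u by rewrite /= eq_sym.
    have -> : w = (out (u, x)).1 by rewrite -(out_uniq wu Hq).
    rewrite -sigmaP //; apply: sigma_inj; apply: pA.2; rewrite -?(Hin u) //.
    rewrite eq_sym; exact: (valP y').
  + have wu : (w, y).1 != u by rewrite /= eq_sym.
    have wu' : (w', y').1 != u by rewrite /= eq_sym.
    by rewrite (out_uniq wu Hq) (out_uniq wu' Hr) eqxx in qr.
Qed.
End Bwd.
End Main.

Theorem proposition5p21 (V W : finType) (G : rel V) (A : rel W) (a : W)
    (H : rel (V * minus_vert a)) :
  cubic G -> cubic A -> is_comp G A a H ->
  (class1 H <-> class1 G /\ class1 A).
Proof.
move=> cubG cubA comp; split.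
  by move=> h; split; [exact: (fwdG cubG cubA comp) | exact: (fwdA cubA comp)].
case=> hG hA.
have [y Hy] : exists y, y \in [set y | A a y].
  by apply/set0Pn; rewrite -card_gt0 cubA.2.
rewrite inE in Hy.
have ny : y != a by rewrite eq_sym; apply: (A_neq cubA).
pose x0 : minus_vert a := exist _ y ny.
have [[cG pG] _] := hG; have [[cA pA] _] := hA.
exact: (bwdH cubA comp pG pA x0 hG hA).
Qed.
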